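(* Let $A=(A_1,\dots,A_d)$ take values in $\{0,1\}^d$ with probabilities $p(a)>0$ for all $a$. For each nonempty $b\subseteq V=\{1,\dots,d\}$ let $p_b$ be the marginal distribution of $(A_v)_{v\in b}$ and define the multivariate logistic parameter $$\eta_b = 2^{-|b|}\sum_{a_b\in\{0,1\}^{|b|}} (-1)^{\sum_{v\in b}a_v}\log p_b(a_b),$$ i.e. the highest-order log-linear interaction (in effect coding) of the marginal distribution of $(A_v)_{v\in b}$. Then $p$ is palindromic, i.e. $p(a)=p(\sim a)$ for all $a$, if and only if $\eta_b=0$ for all $b\subseteq V$ with $|b|$ odd.
   Context: $\sim a$ denotes the complement of the binary vector $a$, i.e. $(\sim a)_v=1-a_v$. $|b|$ denotes the cardinality of the subset $b$. *)

(* Defs.v *)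
From HB Require Import structures.
From mathcomp Require Import all_boot all_order all_algebra.
From mathcomp Require Import reals exp.
Set Implicit Arguments. Unset Strict Implicit. Unset Printing Implicit Defensive.
Import Order.TTheory GRing.Theory Num.Theory.
Local Open Scope ring_scope.

Definition bvec (d : nat) := {ffun 'I_d -> bool}.

Definition bcompl (d : nat) (a : bvec d) : bvec d := [ffun v => ~~ a v].

Definition positive_distribution (R : realType) (d : nat) (p : bvec d -> R) :=
  (forall a, 0 < p a) /\ \sum_(a : bvec d) p a = 1.

Definition palindromic (R : realType) (d : nat) (p : bvec d -> R) :=
  forall a : bvec d, p a = p (bcompl a).

Definition marginal (R : realType) (d : nat) (p : bvec d -> R)
  (b : {set 'I_d}) (c : bvec d) : R :=
  \sum_(a : bvec d | [forall v in b, a v == c v]) p a.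

(* Assignments a_b in {0,1}^b are represented canonically by the vectors
   c with c v = false outside b. *)
Definition supported_in (d : nat) (b : {set 'I_d}) (c : bvec d) : bool :=
  [forall v, (v \notin b) ==> ~~ c v].

Definition mlogit_eta (R : realType) (d : nat) (p : bvec d -> R) (b : {set 'I_d}) : R :=
  (2 ^- #|b|) *
  \sum_(c : bvec d | supported_in b c)
     (-1) ^+ (\sum_(v in b) (c v : nat))%N * ln (marginal p b c).

(* Main.v *)
Require Import Defs.
From HB Require Import structures.
From mathcomp Require Import all_boot all_order all_algebra.
From mathcomp Require Import reals exp.
From mathcomp Require Import lra.
Import Order.TTheory GRing.Theory Num.Theory.
Local Open Scope ring_scope.

Section Pal.
Variables (R : realType) (d : nat) (p : bvec d -> R).

Definition sgn (b : {set 'I_d}) (c : bvec d) : R :=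
  (-1) ^+ (\sum_(v in b) (c v : nat))%N.

Definition flip (v : 'I_d) (c : bvec d) : bvec d :=
  [ffun u => if u == v then ~~ c u else c u].

Definition togb (b : {set 'I_d}) (c : bvec d) : bvec d :=
  [ffun u => if u \in b then ~~ c u else c u].

Lemma marg_agree (b : {set 'I_d}) (c c' : bvec d) : (forall v, v \in b -> c v = c' v) ->
  marginal p b c = marginal p b c'.
Proof.
move=> H; apply: eq_bigl => a; apply/forallP/forallP => /= K v;
  apply/implyP => vb; have := implyP (K v) vb; by rewrite H.
Qed.

Lemma togbK (b : {set 'I_d}) : involutive (togb b).
Proof. by move=> c; apply/ffunP => u; rewrite !ffunE; case: (u \in b) => //; rewrite negbK. Qed.

Lemma sgn_sq (b : {set 'I_d}) (c : bvec d) : sgn b c * sgn b c = 1.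
Proof. by rewrite /sgn -exprD -signr_odd oddD addbb. Qed.

Lemma sgn_togb (b : {set 'I_d}) (c : bvec d) : sgn b (togb b c) = (-1) ^+ #|b| * sgn b c.
Proof.
have E : (\sum_(v in b) (togb b c v : nat) + \sum_(v in b) (c v : nat) = #|b|)%N.
  rewrite -big_split /= -sum1_card; apply: eq_bigr => v vb.
  by rewrite ffunE vb; case: (c v).
have -> : (-1) ^+ #|b| = sgn b (togb b c) * sgn b c :> R by rewrite /sgn -exprD E.
by rewrite -mulrA sgn_sq mulr1.
Qed.

Lemma supp_togb (b : {set 'I_d}) (c : bvec d) : supported_in b (togb b c) = supported_in b c.
Proof.
apply/forallP/forallP => H v; have := H v; rewrite ffunE;
  by case: (boolP (v \in b)).
Qed.

Lemma sum_togb (b : {set 'I_d}) :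
  \sum_(c : bvec d | supported_in b c) sgn b c * ln (marginal p b (bcompl c))
  = (-1) ^+ #|b| * \sum_(c : bvec d | supported_in b c) sgn b c * ln (marginal p b c).
Proof.
rewrite (reindex_inj (can_inj (togbK b))) /= mulr_sumr.
apply: eq_big => c; first by rewrite supp_togb.
move=> _; rewrite sgn_togb mulrA; congr (_ * ln _).
apply: marg_agree => v vb; by rewrite !ffunE vb negbK.
Qed.


Lemma marg_split (b : {set 'I_d}) (v : 'I_d) (c : bvec d) : v \in b ->
  marginal p (b :\ v) c = marginal p b c + marginal p b (flip v c).
Proof.
move=> vb; rewrite /marginal (bigID (fun a : bvec d => a v == c v)) /=; congr (_ + _);
  apply: eq_bigl => a.
  apply/andP/forallP.
    move=> [/forallP H e] u; apply/implyP => ub.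
    case: (eqVneq u v) => [-> // | uv].
    by apply: (implyP (H u)); rewrite !inE uv ub.
  move=> H; split; last exact: (implyP (H v) vb).
  apply/forallP => u; apply/implyP; rewrite !inE => /andP[_ ub].
  exact: (implyP (H u) ub).
apply/andP/forallP.
  move=> [/forallP H e] u; apply/implyP => ub; rewrite ffunE.
  case: (eqVneq u v) => [-> | uv].
    by move: e; case: (a v); case: (c v).
  by apply: (implyP (H u)); rewrite !inE uv ub.
move=> H; split.
  apply/forallP => u; apply/implyP; rewrite !inE => /andP[uv ub].
  by have := implyP (H u) ub; rewrite ffunE (negbTE uv).
by have := implyP (H v) vb; rewrite ffunE eqxx; case: (a v); case: (c v).
Qed.

Lemma flipK (v : 'I_d) : involutive (flip v).
Proof. by move=> c; apply/ffunP => u; rewrite !ffunE; case: (u == v) => //; rewrite negbK. Qed.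

Lemma bcompl_flip (v : 'I_d) (c : bvec d) : bcompl (flip v c) = flip v (bcompl c).
Proof. by apply/ffunP => u; rewrite !ffunE; case: (u == v). Qed.

Lemma sgn_flip (b : {set 'I_d}) (v : 'I_d) (c : bvec d) : v \in b ->
  sgn b (flip v c) = - sgn b c.
Proof.
move=> vb; rewrite /sgn (bigD1 v vb) [in RHS](bigD1 v vb) /=.
have -> : (\sum_(i in b | i != v) (flip v c i : nat) = \sum_(i in b | i != v) (c i : nat))%N.
  by apply: eq_bigr => u /andP[_ uv]; rewrite ffunE (negbTE uv).
by rewrite ffunE eqxx; case: (c v); rewrite /= ?add0n ?exprS ?mulN1r ?opprK.
Qed.

Lemma marg_pos (hp : forall a, 0 < p a) (b : {set 'I_d}) (c : bvec d) :
  0 < marginal p b c.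
Proof.
rewrite /marginal (bigD1 c) /=; last by apply/forallP => u; apply/implyP.
by rewrite ltr_pwDl // ?hp // sumr_ge0 // => a _; apply: ltW.
Qed.


Definition D (b : {set 'I_d}) (c : bvec d) := marginal p b c - marginal p b (bcompl c).

Lemma Dflip (b : {set 'I_d}) (v : 'I_d) (c : bvec d) : v \in b ->
  (forall c, D (b :\ v) c = 0) -> D b (flip v c) = - D b c.
Proof.
move=> vb IH; have h1 := marg_split b v c vb; have h2 := marg_split b v (bcompl c) vb.
move: (IH c); rewrite /D bcompl_flip h1 h2 => E; lra.
Qed.

Definition c0 : bvec d := [ffun=> false].

Lemma sgnD (b : {set 'I_d}) :
  (forall v, v \in b -> forall c, D (b :\ v) c = 0) ->
  forall c, sgn b c * D b c = D b c0.
Proof.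
move=> IH c; move En: (\sum_(v in b) (c v : nat))%N => n; elim: n c En => [|n IHn] c En.
  have Z : forall v, v \in b -> c v = false.
    move=> v vb; move/eqP: En; rewrite sum_nat_eq0 => /forallP/(_ v).
    by rewrite vb /=; case: (c v).
  rewrite /sgn En expr0 mul1r /D; congr (_ - _); apply: marg_agree => v vb;
    by rewrite !ffunE ?Z.
case: (pickP [pred v | (v \in b) && c v]) => [v /andP[vb cv] | none]; last first.
  have : (\sum_(v in b) (c v : nat) == 0)%N.
    rewrite sum_nat_eq0; apply/forallP => v; apply/implyP => vb.
    by have := none v; rewrite /= vb /= => ->.
  by rewrite En.
have Ef : (\sum_(u in b) (flip v c u : nat))%N = n.
  rewrite (bigD1 v vb) /= ffunE eqxx cv /= add0n.
  move: En; rewrite (bigD1 v vb) /= cv add1n => -[<-]; apply: eq_bigr => u /andP[_ uv].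
  by rewrite ffunE (negbTE uv).
have := IHn _ Ef; rewrite sgn_flip // Dflip //; last exact: IH.
by rewrite mulrNN.
Qed.

Lemma term_ge0 (x y : R) : 0 < x -> 0 < y -> 0 <= (x - y) * (ln x - ln y).
Proof.
move=> x0 y0; have xp : x \in Num.pos by rewrite posrE.
have yp : y \in Num.pos by rewrite posrE.
case: (lerP x y) => h.
  apply: mulr_le0; rewrite subr_le0 //; by rewrite ler_ln.
apply: mulr_ge0; rewrite subr_ge0; [exact: ltW | by rewrite ler_ln // ltW].
Qed.

Lemma term_eq0 (x y : R) : 0 < x -> 0 < y -> (x - y) * (ln x - ln y) = 0 -> x = y.
Proof.
move=> x0 y0 /eqP; rewrite mulf_eq0 !subr_eq0 => /orP[/eqP // | /eqP E].
by apply: ln_inj; rewrite ?posrE.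
Qed.

Lemma sgn_neq0 (b : {set 'I_d}) (c : bvec d) : sgn b c != 0.
Proof. by apply/eqP => E; have := sgn_sq b c; rewrite E mul0r => /eqP; rewrite eq_sym oner_eq0. Qed.

Lemma stepD (hp : forall a, 0 < p a) (b : {set 'I_d}) :
  \sum_(c : bvec d | supported_in b c) sgn b c * ln (marginal p b c) =
  \sum_(c : bvec d | supported_in b c) sgn b c * ln (marginal p b (bcompl c)) ->
  (forall v, v \in b -> forall c, D (b :\ v) c = 0) -> forall c, D b c = 0.
Proof.
move=> Heta IH.
have HS : \sum_(c : bvec d | supported_in b c)
    sgn b c * (ln (marginal p b c) - ln (marginal p b (bcompl c))) = 0.
  by rewrite (eq_bigr _ (fun c _ => mulrBr _ _ _)) sumrB Heta subrr.
have HT : \sum_(c : bvec d | supported_in b c)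
    D b c * (ln (marginal p b c) - ln (marginal p b (bcompl c))) = 0.
  rewrite -[RHS](mulr0 (D b c0)) -[in RHS]HS mulr_sumr; apply: eq_bigr => c _.
  rewrite -(sgnD b IH c) mulrA; congr (_ * _).
  by rewrite -mulrA [D b c * _]mulrC mulrA sgn_sq mul1r.
have c0s : supported_in b c0 by apply/forallP => u; rewrite ffunE implybT.
have Z := psumr_eq0P _ HT.
have t0 : D b c0 = 0.
  apply/eqP; rewrite subr_eq0; apply/eqP; apply: term_eq0; rewrite ?marg_pos //.
  apply: Z c0s => c _; apply: term_ge0; exact: marg_pos.
move=> c; have := sgnD b IH c; rewrite t0 => /eqP; rewrite mulf_eq0 (negbTE (sgn_neq0 b c)) /=.
by move/eqP.
Qed.


End Pal.

Lemma bcomplK (d : nat) : involutive (@bcompl d).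
Proof. by move=> c; apply/ffunP => u; rewrite !ffunE negbK. Qed.

Lemma marg_setT (R : realType) (d : nat) (p : bvec d -> R) (c : bvec d) :
  marginal p setT c = p c.
Proof.
rewrite /marginal (big_pred1 c) // => a /=.
apply/forallP/eqP => [H|->]; last by move=> u; apply/implyP.
by apply/ffunP => u; apply/eqP; apply: (implyP (H u)); rewrite inE.
Qed.

Theorem proposition2p3 (R : realType) (d : nat) (p : bvec d -> R)
  (hp : positive_distribution p) :
  palindromic p <-> (forall b : {set 'I_d}, odd #|b| -> mlogit_eta p b = 0).
Proof.
have [hpos _] := hp.
have etaE b : mlogit_eta p b = 2^-#|b| *
   \sum_(c : bvec d | supported_in b c) sgn R d b c * ln (marginal p b c) by [].
have n2 (b : {set 'I_d}) : (2:R)^-#|b| != 0 by rewrite invr_neq0 // expf_neq0 // pnatr_eq0.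
split.
  move=> pal b ob.
  have M c : marginal p b (bcompl c) = marginal p b c.
    rewrite /marginal (reindex_inj (can_inj (@bcomplK d))) /=.
    apply: eq_big => [a|a _]; last by rewrite [RHS]pal.
    apply/forallP/forallP => K u; have := K u; rewrite !ffunE;
      by case: (u \in b); case: (a u); case: (c u).
  have := sum_togb R d p b.
  rewrite (eq_bigr (fun c => sgn R d b c * ln (marginal p b c))); last first.
    by move=> c _; rewrite M.
  rewrite -signr_odd ob expr1 etaE => E.
  have -> : \sum_(c : bvec d | supported_in b c) sgn R d b c * ln (marginal p b c) = 0 by lra.
  by rewrite mulr0.
move=> H.
have all n : forall b : {set 'I_d}, (#|b| < n)%N -> forall c, D R d p b c = 0.
  elim: n => [//|n IHn] b bn; apply: stepD => //.
    rewrite sum_togb; case ob: (odd #|b|).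
      move: (H b ob); rewrite etaE => /eqP; rewrite mulf_eq0 (negbTE (n2 b)) /= => /eqP ->.
      by rewrite mulr0.
    by rewrite -signr_odd ob expr0 mul1r.
  move=> v vb; apply: IHn; move: bn; rewrite (cardsD1 v b) vb; by [].
move=> a; have := all (#|[set: 'I_d]|.+1) setT (ltnSn _) a.
rewrite /D !marg_setT => /eqP; rewrite subr_eq0 => /eqP.
by [].
Qed.
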